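(* Let $m\ge 1$ and let $\Sigma=\begin{pmatrix}2I_{m+1} & I_{m+1}\\ I_{m+1} & 2I_{m+1}\end{pmatrix}\in\mathbb{R}^{(2m+2)\times(2m+2)}$, where $I_{m+1}$ is the $(m+1)\times(m+1)$ identity matrix. Then every $(2m+1)\times(2m+1)$ principal submatrix of $\Sigma$ belongs to $F_{2m+1,m}$, but $\Sigma\notin F_{2m+2,m}$.
   Context: For integers $p\ge 1$, $m\ge 1$, $F_{p,m}=\{\Delta+\Gamma\Gamma^t : \Delta \text{ a positive definite diagonal } p\times p \text{ matrix},\ \Gamma\in\mathbb{R}^{p\times m}\}$. *)

(* Defs.v *)
(* real numbers generalized to an arbitrary real closed field. *)
From HB Require Import structures.
From mathcomp Require Import all_boot all_order all_algebra.
Set Implicit Arguments. Unset Strict Implicit. Unset Printing Implicit Defensive.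
Import Order.TTheory GRing.Theory Num.Theory.
Local Open Scope ring_scope.

(* S \in F_{p,m}: S = Delta + Gamma Gamma^T with Delta a positive definite
   diagonal p x p matrix (diagonal with positive diagonal entries) and
   Gamma a p x m matrix. *)
Definition inF (R : rcfType) (p m : nat) (S : 'M[R]_p) : Prop :=
  exists (d : 'rV[R]_p) (G : 'M[R]_(p, m)),
    (forall i : 'I_p, 0 < d 0 i) /\ S = diag_mx d + G *m G^T.

Definition Sigma (R : rcfType) (m : nat) : 'M[R]_(m.+1 + m.+1) :=
  block_mx (2%:M) (1%:M) (1%:M) (2%:M).

(* Main.v *)
Require Import Defs.
From HB Require Import structures.
From mathcomp Require Import all_boot all_order all_algebra.
Set Implicit Arguments. Unset Strict Implicit. Unset Printing Implicit Defensive.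
Import Order.TTheory GRing.Theory Num.Theory.
Local Open Scope ring_scope.

Lemma SigmaE (R : rcfType) (m : nat) (a b : 'I_(m.+1 + m.+1)) :
  Sigma R m a b = if a == b then 2 else ((a %% m.+1 == b %% m.+1)%N)%:R.
Proof.
rewrite /Sigma -(splitK a) -(splitK b).
case: (split a) => i; case: (split b) => j /=.
- rewrite block_mxEul mxE eq_lshift /= modn_small // modn_small //.
  case: eqP => [_|/eqP/negbTE h]; first by rewrite mulr1n. by rewrite -val_eqE in h; rewrite h.
- rewrite block_mxEur mxE eq_lrshift /= modnDl modn_small // modn_small //.
- rewrite block_mxEdl mxE eq_rlshift /= modnDl modn_small // modn_small //.
- rewrite block_mxEdr mxE eq_rshift /= !modnDl modn_small // modn_small //.
  case: eqP => [_|/eqP/negbTE h]; first by rewrite mulr1n. by rewrite -val_eqE in h; rewrite h.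
Qed.

Lemma notF (R : rcfType) (m : nat) : ~ inF m (Sigma R m).
Proof.
move=> [d [G [_ E]]].
set A := usubmx (G : 'M_(m.+1 + m.+1, m)).
set B := dsubmx (G : 'M_(m.+1 + m.+1, m)).
have AB : A *m B^T = 1%:M.
  apply/matrixP => i j.
  have := congr1 (fun M : 'M_(m.+1 + m.+1) => M (lshift m.+1 i) (rshift m.+1 j)) E.
  rewrite /= {1}/Sigma block_mxEur !mxE eq_lrshift mulr0n add0r => ->.
  by apply: eq_bigr => l _; rewrite !mxE.
have := mxrankM_maxl A B^T.
rewrite AB mxrank1 => h.
have := leq_trans h (rank_leq_col A).
by rewrite ltnn.
Qed.

Section Tr.
Local Open Scope nat_scope.
Lemma triple (n x y z : nat) : (x < n + n)%N -> (y < n + n)%N -> (z < n + n)%N ->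
  x %% n = y %% n -> y %% n = z %% n -> x != y -> y != z -> x != z -> False.
Proof.
move=> hx hy hz exy eyz nxy nyz nxz.
have n0 : (0 < n)%N by case: n hx {hy hz exy eyz} => // _; rewrite addn0 ltn0.
have q2 u : (u < n + n)%N -> (u %/ n < 2)%N by move=> hu; rewrite ltn_divLR // mul2n -addnn.
have qne u v : u %% n = v %% n -> u != v -> u %/ n != v %/ n.
  move=> e; apply: contra => /eqP e2; apply/eqP.
  by rewrite (divn_eq u n) (divn_eq v n) e e2.
have := qne _ _ exy nxy; have := qne _ _ eyz nyz; have := qne _ _ (etrans exy eyz) nxz.
move: (q2 _ hx) (q2 _ hy) (q2 _ hz).
move: (x %/ n) (y %/ n) (z %/ n) => a b c.
by case: a => [|[|a]] //; case: b => [|[|b]] //; case: c => [|[|c]].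
Qed.
End Tr.

Definition cm m (a : 'I_(m.+1+m.+1)) : 'I_m.+1 := Ordinal (ltn_pmod a (ltn0Sn m)).
Definition om m (k : 'I_(m.+1+m.+1)) (i : 'I_(m.+1+m.+1).-1) : option 'I_m :=
  unlift (cm k) (cm (lift k i)).
Definition Gm (R : rcfType) m k : 'M[R]_((m.+1+m.+1).-1, m) :=
  \matrix_(i, l) (if om k i is Some j then (j == l)%:R else 0).
Definition dm (R : rcfType) m k : 'rV[R]_((m.+1+m.+1).-1) :=
  \row_i (if om k i is Some _ then 1 else 2).

Lemma GG (R : rcfType) (m : nat) (k : 'I_(m.+1+m.+1)) i i' :
  (Gm R k *m (Gm R k)^T) i i' = if om k i is Some j then (om k i' == Some j)%:R else 0.
Proof.
rewrite mxE; under eq_bigr => l _ do rewrite !mxE.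
case: (om k i) => [j|]; last by rewrite big1 // => l _; rewrite mul0r.
rewrite (bigD1 j) //= big1 ?addr0 => [|l ne]; last by rewrite eq_sym (negbTE ne) mul0r.
rewrite eqxx mul1r; case: (om k i') => [j'|] //=.
Qed.

Lemma inFsub (R : rcfType) (m : nat) (k : 'I_(m.+1 + m.+1)) :
  inF m (row' k (col' k (Sigma R m))).
Proof.
exists (dm R k), (Gm R k); split.
  by move=> i; rewrite mxE; case: (om k i) => *; rewrite ?ltr01 ?ltr0n.
apply/matrixP => i i'.
rewrite [in RHS]mxE GG [in RHS]mxE [in RHS]mxE [in LHS]mxE [in LHS]mxE SigmaE.
have [<-|ne] := eqVneq i i'.
  rewrite !eqxx mulr1n; case: (om k i) => [j|]; rewrite ?eqxx ?addr0 //.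
have nl : (lift k i == lift k i') = false by rewrite (inj_eq (@lift_inj _ k)) (negbTE ne).
rewrite nl mulr0n add0r.
have -> : (lift k i %% m.+1 == lift k i' %% m.+1)%N = (cm (lift k i) == cm (lift k i')) by [].
rewrite /om.
case: (unliftP (cm k) (cm (lift k i))) => [j Ej|Ej]; case: (unliftP (cm k) (cm (lift k i'))) => [j' Ej'|Ej'] //=.
- by rewrite Ej Ej' (inj_eq (@lift_inj _ _)) eq_sym.
- by rewrite Ej Ej' eq_sym (negbTE (neq_lift _ _)).
- by rewrite Ej Ej' (negbTE (neq_lift _ _)).
exfalso; apply: (@triple m.+1 (lift k i) (lift k i') k) => //.
- exact: (congr1 val (etrans Ej (esym Ej'))).
- exact: (congr1 val Ej').
- exact: (negbT nl).
- by rewrite eq_sym; exact: neq_lift.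
- by rewrite eq_sym; exact: neq_lift.
Qed.

Theorem mainTheorem8 (R : rcfType) (m : nat) (hm : (1 <= m)%N) :
  (forall k : 'I_(m.+1 + m.+1),
      inF m (row' k (col' k (Sigma R m))))
  /\ ~ inF m (Sigma R m).
Proof. split; [exact: inFsub | exact: notF]. Qed.
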